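(* Let $U\in U(N)$ be such that the bistochastic matrix $B$ with $B_{ij}=|U_{ij}|^2$ belongs to the ray of some permutation matrix, i.e. $B=\alpha P+(1-\alpha)W_N$ for a permutation matrix $P$ and some $\alpha\in[0,1]$. For $i,j\in\{1,\dots,N\}$ define $|\psi_{ij}\rangle=\sum_{k=1}^N U_{ik}\,|k\rangle\otimes|k\oplus j\rangle\in\mathbb{C}^N\otimes\mathbb{C}^N$. Then $\{|\psi_{ij}\rangle\}_{i,j=1}^N$ is an orthonormal basis of $\mathbb{C}^N\otimes\mathbb{C}^N$, and all $N^2$ vectors have the same multiset of squared Schmidt coefficients, namely $\{\tfrac{1+\alpha(N-1)}{N},\tfrac{1-\alpha}{N},\dots,\tfrac{1-\alpha}{N}\}$ (with $\tfrac{1-\alpha}{N}$ repeated $N-1$ times). In particular all basis vectors have the same value of any entanglement measure that depends only on the Schmidt coefficients; for $\alpha=1$ the basis is a product basis and for $\alpha=0$ it consists of maximally entangled states.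
   Context: $\{|1\rangle,\dots,|N\rangle\}$ is the computational basis of $\mathbb{C}^N$; $\oplus$ denotes addition modulo $N$ on the labels $\{1,\dots,N\}$. $W_N$ is the $N\times N$ matrix with all entries $1/N$. A bistochastic matrix is a nonnegative real matrix with all row and column sums equal to 1. *)

(* Defs.v *)
(* Complex numbers: an arbitrary numClosedFieldType C
   (e.g. R[i] for a real closed field R); reals are the elements of C in Num.real. *)
From HB Require Import structures.
From mathcomp Require Import all_boot all_order all_algebra all_fingroup.
Set Implicit Arguments. Unset Strict Implicit. Unset Printing Implicit Defensive.
Import Order.TTheory GRing.Theory Num.Theory.
Local Open Scope ring_scope.

Definition oplus (N : nat) (k j : 'I_N) : 'I_N :=
  Ordinal (ltn_pmod (k + j) (leq_ltn_trans (leq0n k) (ltn_ord k))).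

Definition adjmx (C : numClosedFieldType) (m n : nat) (A : 'M[C]_(m, n)) : 'M[C]_(n, m) :=
  (map_mx (@Num.conj_op C) A)^T.

Definition unitary_mx (C : numClosedFieldType) (N : nat) (U : 'M[C]_N) : Prop :=
  U *m adjmx U = 1%:M.

(* A vector of C^N (x) C^N is represented by its coefficient matrix X, i.e.
   sum_{a,b} X a b |a> (x) |b>. *)
Definition tensor_inner (C : numClosedFieldType) (N : nat) (X Y : 'M[C]_N) : C :=
  \sum_(a < N) \sum_(b < N) (X a b)^* * Y a b.

(* |psi_ij> = sum_k U_ik |k> (x) |k (+) j> *)
Definition psi (C : numClosedFieldType) (N : nat) (U : 'M[C]_N) (i j : 'I_N) : 'M[C]_N :=
  \matrix_(a < N, b < N) (if b == oplus a j then U i a else 0).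

(* s (with multiplicity, as a row vector) is a family of Schmidt coefficients of X:
   X = sum_k s_k e_k (x) f_k with orthonormal (e_k), (f_k), s_k >= 0. *)
Definition schmidt_decomposition (C : numClosedFieldType) (N : nat)
    (X : 'M[C]_N) (s : 'rV[C]_N) : Prop :=
  exists V W : 'M[C]_N, [/\ unitary_mx V, unitary_mx W,
     (forall k, 0 <= s 0 k) & X = V *m diag_mx s *m W^T].

(* Main.v *)
Require Import Defs.
From HB Require Import structures.
From mathcomp Require Import all_boot all_order all_algebra all_fingroup.
From mathcomp Require Import ring.
Import Order.TTheory GRing.Theory Num.Theory.
Local Open Scope ring_scope.

Lemma oplus_injr N (a : 'I_N) : injective (oplus a).
Proof.
move=> j j' /(congr1 val) /= /eqP; rewrite eqn_modDl => /eqP.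
by rewrite !modn_small // => /val_inj.
Qed.

Lemma oplus_injl N (j : 'I_N) : injective (fun a => oplus a j).
Proof.
move=> a a' /(congr1 val) /= /eqP; rewrite eqn_modDr => /eqP.
by rewrite !modn_small // => /val_inj.
Qed.

Lemma perm_entry (C : numClosedFieldType) n (s : 'S_n) i j :
  (perm_mx s i j : C) = (s i == j)%:R.
Proof. by rewrite perm_mxEsub !mxE. Qed.

Lemma sum_pick (C : numClosedFieldType) N (x y : 'I_N) (f g : C) :
  \sum_(b < N) (if b == x then f else 0)^* * (if b == y then g else 0)
  = (x == y)%:R * (f^* * g).
Proof.
rewrite (bigD1 x) //= big1 => [|b]; last first.
  by move=> Hb; rewrite (negbTE Hb) conjC0 mul0r.
rewrite eqxx addr0; case: (x == y); by rewrite ?mul1r ?mulr0 ?mul0r.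
Qed.

Lemma adjU_unit (C : numClosedFieldType) N (U : 'M[C]_N) :
  unitary_mx U -> adjmx U *m U = 1%:M.
Proof. by move=> /mulmx1C. Qed.

Lemma ortho (C : numClosedFieldType) N (U : 'M[C]_N) :
  unitary_mx U -> forall i j i' j' : 'I_N,
      tensor_inner (psi U i j) (psi U i' j') = ((i == i') && (j == j'))%:R.
Proof.
move=> HU i j i' j'; rewrite /tensor_inner.
under eq_bigr => a _ do under eq_bigr => b _ do rewrite !mxE.
under eq_bigr => a _ do rewrite sum_pick.
have E : forall a : 'I_N, (oplus a j == oplus a j') = (j == j').
  by move=> a; apply/eqP/eqP => [/oplus_injr|->].
under eq_bigr => a _ do rewrite E.
rewrite -big_distrr /=.
have := congr1 (fun M : 'M[C]_N => M i' i) HU; rewrite !mxE => H.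
have -> : \sum_(a < N) (U i a)^* * U i' a = (i' == i)%:R.
  rewrite -H; apply: eq_bigr => a _; rewrite !mxE mulrC //.
by rewrite [i' == i]eq_sym; case: (j == j'); case: (i == i'); rewrite /= ?mul1r ?mul0r ?mulr0 ?mulr1.
Qed.

Lemma span (C : numClosedFieldType) N (U : 'M[C]_N) :
  unitary_mx U -> forall X : 'M[C]_N, exists c : 'M[C]_N,
      X = \sum_(i < N) \sum_(j < N) c i j *: psi U i j.
Proof.
move=> HU X.
exists (\matrix_(i, j) \sum_(a < N) X a (oplus a j) * (U i a)^*).
apply/matrixP => a b.
rewrite summxE; under eq_bigr => i _ do rewrite summxE.
under eq_bigr => i _ do under eq_bigr => j _ do rewrite !mxE.
rewrite exchange_big /=.
pose s := perm (@oplus_injr N a).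
set j0 := s^-1%g b.
have Hj0 : oplus a j0 = b by have := permKV s b; rewrite permE.
rewrite (bigD1 j0) //= [X in _ + X]big1 => [|j Hj]; last first.
  apply: big1 => i _; rewrite -Hj0.
  have -> : (oplus a j0 == oplus a j) = false.
    by apply/negbTE; apply: contra Hj => /eqP /oplus_injr ->.
  by rewrite mulr0.
rewrite addr0 -Hj0 eqxx.
under eq_bigr => i _ do rewrite big_distrl /=.
rewrite exchange_big /=.
have H := @adjU_unit C N U HU.
rewrite (bigD1 a) //= [X in _ + X]big1 => [|a' Ha']; last first.
  have := congr1 (fun M : 'M[C]_N => M a' a) H; rewrite !mxE (negbTE Ha') /= => E.
  transitivity (X a' (oplus a' j0) * \sum_(j<N) adjmx U a' j * U j a); last by rewrite E mulr0.
  rewrite mulr_sumr; apply: eq_bigr => i _.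
  by rewrite !mxE mulrA.
have := congr1 (fun M : 'M[C]_N => M a a) H; rewrite !mxE eqxx /= => E.
rewrite addr0.
transitivity (X a (oplus a j0) * \sum_(j<N) adjmx U a j * U j a); first by rewrite E mulr1.
rewrite mulr_sumr; apply: eq_bigr => i _.
by rewrite !mxE mulrA.
Qed.
Set Implicit Arguments. Unset Strict Implicit.

Definition ph (C : numClosedFieldType) (x : C) : C := if x == 0 then 1 else x / `|x|.

Lemma ph_unit (C : numClosedFieldType) (x : C) : ph x * (ph x)^* = 1.
Proof.
rewrite /ph; case: eqP => [_|/eqP nz]; first by rewrite conjC1 mulr1.
have -> : (x / `|x|)^* = x^* / `|x|.
  by rewrite rmorphM fmorphV /=; congr (_ * _ ^-1); apply: conj_normC.
rewrite mulrACA -normCK -invfM -expr2 mulfV //.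
by rewrite expf_eq0 normr_eq0.
Qed.

Lemma ph_norm (C : numClosedFieldType) (x : C) : ph x * `|x| = x.
Proof.
rewrite /ph; case: eqP => [->|/eqP nz]; first by rewrite normr0 mulr0.
by rewrite divfK // normr_eq0.
Qed.

Lemma diag_unit (C : numClosedFieldType) N (v : 'rV[C]_N) :
  (forall a, v 0 a * (v 0 a)^* = 1) -> unitary_mx (diag_mx v).
Proof.
move=> Hv; rewrite /unitary_mx /adjmx.
have -> : map_mx (@Num.conj_op C) (diag_mx v) = diag_mx (map_mx (@Num.conj_op C) v).
  exact: (map_diag_mx (Num.conj_op : {rmorphism C -> C})).
rewrite tr_diag_mx mul_diag_mx; apply/matrixP => a b; rewrite !mxE.
case: (a == b); by rewrite ?mulr1n ?mulr0n ?mulr0 // Hv.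
Qed.

Lemma perm_unit (C : numClosedFieldType) N (s : 'S_N) :
  unitary_mx ((perm_mx s)^T : 'M[C]_N).
Proof.
rewrite /unitary_mx /adjmx map_trmx trmxK.
rewrite (map_perm_mx (Num.conj_op : {rmorphism C -> C})).
by rewrite tr_perm_mx -perm_mxM mulVg perm_mx1.
Qed.

Lemma schmidt (C : numClosedFieldType) N (U : 'M[C]_N) (i j : 'I_N) :
  schmidt_decomposition (psi U i j) (\row_k `|U i k|).
Proof.
pose s := perm (@oplus_injl N j).
exists (diag_mx (\row_a ph (U i a))), (perm_mx s)^T; split.
- by apply: diag_unit => a; rewrite mxE ph_unit.
- exact: perm_unit.
- by move=> k; rewrite mxE normr_ge0.
rewrite trmxK -mulmxA !mul_diag_mx; apply/matrixP => a b; rewrite !mxE permE.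
rewrite [oplus a j == b]eq_sym; case: (b == oplus a j); last by rewrite mulr0n !mulr0.
by rewrite mulr1n mulr1 ph_norm.
Qed.

Theorem mainTheorem6 (C : numClosedFieldType) (N : nat) (U : 'M[C]_N)
    (P : 'S_N) (alpha : C) :
  unitary_mx U ->
  alpha \is Num.real -> 0 <= alpha <= 1 ->
  (forall i j : 'I_N,
      `|U i j| ^+ 2 = alpha * (perm_mx P i j : C) + (1 - alpha) / N%:R) ->
  (* orthonormal *)
  (forall i j i' j' : 'I_N,
      tensor_inner (psi U i j) (psi U i' j') = ((i == i') && (j == j'))%:R) /\
  (* spanning, hence a basis *)
  (forall X : 'M[C]_N, exists c : 'M[C]_N,
      X = \sum_(i < N) \sum_(j < N) c i j *: psi U i j) /\
  (* common Schmidt coefficients *)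
  (forall i j : 'I_N, exists (s : 'rV[C]_N) (k0 : 'I_N),
      schmidt_decomposition (psi U i j) s /\
      forall k : 'I_N, s 0 k ^+ 2 =
        (if k == k0 then (1 + alpha * (N%:R - 1)) / N%:R else (1 - alpha) / N%:R)).
Proof.
move=> HU _ _ HB; split; first exact: ortho.
split; first exact: span.
move=> i j; exists (\row_k `|U i k|), (P i); split; first exact: schmidt.
move=> k; rewrite mxE HB perm_entry [k == P i]eq_sym.
have NZ : (N%:R : C) != 0 by rewrite pnatr_eq0 -lt0n (leq_ltn_trans (leq0n i) (ltn_ord i)).
case: (P i == k) => /=; last by rewrite mulr0 add0r.
by field.
Qed.
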